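(* Let $\mathcal{U}=\{1,\dots,N\}$ be a set of domains, data $(\mathbf{x},u)\sim p(\mathbf{x},u)$ with $p(u=i)=1/N$ for all $i$, and let $E$ be an encoder with $\mathbf{e}=E(\mathbf{x})$. Let $w_{ij}>0$ ($i\ne j$) be weights, and for each ordered pair $i\ne j$ let $D_{ij}:\mathcal{Z}\to(0,1)$ be a pairwise discriminator. Define the value $$V(E,\{D_{ij}\})=\frac12\sum_{i\neq j} w_{ij}\Big(p(u=i)\,\mathbb{E}_{\mathbf{e}\mid u=i}[\log D_{ij}(\mathbf{e})]+p(u=j)\,\mathbb{E}_{\mathbf{e}\mid u=j}[\log(1-D_{ij}(\mathbf{e}))]\Big),$$ which is the objective $\mathbb{E}[\sum_{j\ne i} w_{ij}\log D_{ij}(E(\mathbf{x}))]$ of the min-max game $\min_E\max_{\{D_{ij}\}} V$. Then for every encoder $E$, $$\max_{\{D_{ij}\}} V(E,\{D_{ij}\})\ \ge\ -\frac{\log 2}{N}\sum_{i\ne j} w_{ij},$$ and this lower bound is tight: equality (the optimum of the min-max game) is achieved when $p(\mathbf{e}\mid u=i)=p(\mathbf{e}\mid u=j)$ for all $i,j$, equivalently $p(\mathbf{e}\mid u=i)=p(\mathbf{e})$ for all $i$.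
   Context: $\mathcal{Z}$ denotes the encoding space and $p(\mathbf{e}\mid u=i)$ the distribution of encodings of data from domain $i$. The weights $w_{ij}$ are meant to reflect pairwise domain distances from a domain taxonomy (e.g. $w_{ij}\propto 1/\mathbf{A}_{ij}$ with $\mathbf{A}_{ij}$ the taxonomy distance between domains), but the result holds for arbitrary positive weights. *)

(* Defs.v *)
From mathcomp Require Import all_boot all_order all_algebra.
From mathcomp Require Import all_classical all_reals all_analysis.
Set Implicit Arguments. Unset Strict Implicit. Unset Printing Implicit Defensive.
Import Order.TTheory GRing.Theory Num.Theory.
Local Open Scope classical_set_scope.
Local Open Scope ring_scope.

(* X : data space; Px i = p(x | u = i); E : encoder X -> Z; the joint law has
   p(u = i) = 1/N, so it is determined by the Px i. *)

Definition admissible_disc (N : nat) d' (Z : measurableType d') (R : realType)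
  (D : 'I_N -> 'I_N -> Z -> R) : Prop :=
  forall i j : 'I_N, i != j ->
    measurable_fun [set: Z] (D i j) /\ (forall z, 0 < D i j z < 1).

(* The value V(E, {D_ij}) (extended-real: expectations of log may be -oo). *)
Definition disc_value (N : nat) d (X : measurableType d) d' (Z : measurableType d')
  (R : realType) (w : 'I_N -> 'I_N -> R) (Px : 'I_N -> probability X R)
  (E : X -> Z) (D : 'I_N -> 'I_N -> Z -> R) : \bar R :=
  ((2%:R)^-1)%:E *
  (\sum_(i < N) \sum_(j < N | j != i)
     (w i j)%:E *
     (((N%:R)^-1)%:E * (\int[Px i]_x (ln (D i j (E x)))%:E)
      + ((N%:R)^-1)%:E * (\int[Px j]_x (ln (1 - D i j (E x)))%:E)))%E.

Definition max_disc_value (N : nat) d (X : measurableType d) d' (Z : measurableType d')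
  (R : realType) (w : 'I_N -> 'I_N -> R) (Px : 'I_N -> probability X R)
  (E : X -> Z) : \bar R :=
  ereal_sup [set disc_value w Px E D | D in [set D | admissible_disc D]].

Definition enc_dist (N : nat) d (X : measurableType d) d' (Z : measurableType d')
  (R : realType) (Px : 'I_N -> probability X R) (E : X -> Z) (i : 'I_N) :
  set Z -> \bar R := pushforward (Px i) E.

(* Main.v *)
Require Import Defs.
From mathcomp Require Import all_boot all_order all_algebra.
From mathcomp Require Import all_classical all_reals all_analysis.
From mathcomp Require Import ring lra measurable_realfun.
Import Order.TTheory GRing.Theory Num.Theory.
Local Open Scope classical_set_scope.
Local Open Scope ring_scope.

Lemma ln_pair (R : realType) (x : R) : 0 < x < 1 -> ln x + ln (1 - x) <= - (ln 2 *+ 2).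
Proof.
move=> /andP[x0 x1].
have h1 : ln (1 + (2 * x - 1)) <= 2 * x - 1 by apply: le_ln1Dx; lra.
have h2 : ln (1 + (1 - 2 * x)) <= 1 - 2 * x by apply: le_ln1Dx; lra.
have e1 : 1 + (2 * x - 1) = 2 * x by ring.
have e2 : 1 + (1 - 2 * x) = 2 * (1 - x) by ring.
rewrite e1 lnM ?posrE in h1; [|lra|lra].
rewrite e2 lnM ?posrE in h2; [|lra|lra].
rewrite mulr2n; lra.
Qed.

Lemma int_ln_neg (R : realType) d (X : measurableType d) (P : probability X R)
  (f : X -> R) (mf : measurable_fun setT f) (f01 : forall x, 0 < f x < 1) :
  (\int[P]_x (ln (f x))%:E = - \int[P]_x (- ln (f x))%:E)%E
  /\ (0 <= \int[P]_x (- ln (f x))%:E)%E.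
Proof.
have h0 : forall x, (0 <= (- ln (f x))%:E)%E.
  move=> x; rewrite lee_fin oppr_ge0; apply: ln_le0.
  by have /andP[_ /ltW] := f01 x.
split; last by apply: integral_ge0 => x _.
rewrite -integral_ge0N //; apply: eq_integral => x _ /=.
by rewrite opprK.
Qed.

Lemma pair_bound (R : realType) d (X : measurableType d) d' (Z : measurableType d')
  (P Q : probability X R) (E : X -> Z) (mE : measurable_fun setT E)
  (g : Z -> R) (mg : measurable_fun setT g) (g01 : forall z, 0 < g z < 1)
  (PQ : forall A, measurable A -> pushforward P E A = pushforward Q E A) :
  (\int[P]_x (ln (g (E x)))%:E <= 0)%E /\ (\int[Q]_x (ln (1 - g (E x)))%:E <= 0)%E /\
  (\int[P]_x (ln (g (E x)))%:E + \int[Q]_x (ln (1 - g (E x)))%:E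
     <= (- (ln 2 *+ 2))%:E)%E.
Proof.
have mgE : measurable_fun setT (g \o E) by exact: measurableT_comp.
have mgE' : measurable_fun setT (fun x => 1 - g (E x)).
  by apply: measurable_funB => //; exact: measurable_cst.
have gE01 : forall x, 0 < (g \o E) x < 1 by move=> x; exact: g01.
have gE01' : forall x, 0 < 1 - g (E x) < 1.
  by move=> x; have /andP[a b] := g01 (E x); apply/andP; split; lra.
have [eP hP] := @int_ln_neg _ _ _ P _ mgE gE01.
have [eQ hQ] := @int_ln_neg _ _ _ Q _ mgE' gE01'.
have mk : measurable_fun setT (fun z => (- ln (1 - g z))%:E).
  apply/measurable_EFinP; apply: measurableT_comp => //.
  apply: measurableT_comp; first exact: measurable_ln.
  by apply: measurable_funB => //; exact: measurable_cst.
have mh : measurable_fun setT (fun z => (- ln (g z))%:E).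
  apply/measurable_EFinP; apply: measurableT_comp => //.
  apply: measurableT_comp => //; exact: measurable_ln.
have k0 : forall z, (0 <= (- ln (1 - g z))%:E)%E.
  move=> z; rewrite lee_fin oppr_ge0; apply: ln_le0.
  have /andP[a b] := g01 z; lra.
have h0 : forall z, (0 <= (- ln (g z))%:E)%E.
  move=> z; rewrite lee_fin oppr_ge0; apply: ln_le0.
  have /andP[a b] := g01 z; lra.
have eqQP : (\int[Q]_x (- ln (1 - g (E x)))%:E = \int[P]_x (- ln (1 - g (E x)))%:E)%E.
  transitivity (\int[pushforward Q E]_(y in setT) (- ln (1 - g y))%:E)%E.
    by rewrite ge0_integral_pushforward // preimage_setT.
  transitivity (\int[pushforward P E]_(y in setT) (- ln (1 - g y))%:E)%E.
    apply: eq_measure_integral => A mA _; symmetry; exact: PQ.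
  by rewrite ge0_integral_pushforward // preimage_setT.
split; first by rewrite eP leeNl oppe0.
split; first by rewrite eQ leeNl oppe0.
rewrite eP eQ eqQP.
rewrite -oppeD; last by rewrite ge0_adde_def // inE // -eqQP.
rewrite -ge0_integralD //; [|by move=> x _; exact: h0|exact: measurableT_comp mh mE|exact: measurableT_comp mk mE].
rewrite EFinN leeN2.
have -> : ((ln 2 *+ 2)%:E = \int[P]_x (cst (ln 2 *+ 2)%:E) x)%E.
  rewrite integral_cst //.
  have h1 := @probability_setT _ _ _ P.
  set m := (X in (_ * X)%E).
  have -> : m = 1%E by exact: h1.
  by rewrite mule1.
have c0 : forall x, [set: X] x -> (0 <= (cst (ln 2 *+ 2)%:E x : \bar R))%E.
  by move=> x _; rewrite lee_fin; apply: mulrn_wge0; apply: ln_ge0; lra.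
have mc : measurable_fun [set: X] (cst (ln 2 *+ 2)%:E : X -> \bar R) by exact: measurable_cst.
have ms : measurable_fun [set: X] (fun x => (- ln ((g \o E) x))%:E + (- ln (1 - g (E x)))%:E)%E.
  apply: emeasurable_funD; [exact: measurableT_comp mh mE|exact: measurableT_comp mk mE].
apply: ge0_le_integral => //.
move=> x _ /=; rewrite -EFinD lee_fin.
have := @ln_pair _ _ (g01 (E x)); lra.
Qed.

Lemma int_cstP (R : realType) d (X : measurableType d) (P : probability X R) (r : R) :
  (\int[P]_x r%:E = r%:E)%E.
Proof.
have := integral_cst P (@measurableT _ X) r%:E.
move=> ->; have h1 := @probability_setT _ _ _ P.
set m := (X in (_ * X)%E).
have -> : m = 1%E by exact: h1.
by rewrite mule1.
Qed.

Lemma sum_val (R : realType) (N : nat) (N_gt0 : (0 < N)%N) (w : 'I_N -> 'I_N -> R) :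
  (((2%:R)^-1)%:E * (\sum_(i < N) \sum_(j < N | j != i)
      (w i j * (- (ln 2 *+ 2) / N%:R))%:E) =
  (- (ln 2 / N%:R) * \sum_(i < N) \sum_(j < N | j != i) w i j)%:E)%E.
Proof.
under eq_bigr do rewrite sumEFin.
rewrite sumEFin -EFinM; congr EFin.
under eq_bigr do rewrite -mulr_suml.
rewrite -mulr_suml.
have N0 : N%:R != 0 :> R by rewrite pnatr_eq0 -lt0n.
rewrite mulr2n; field; exact: N0.
Qed.

Theorem theorem4p3 (R : realType) (d : measure_display) (X : measurableType d)
  (d' : measure_display) (Z : measurableType d') (N : nat) (N_gt0 : (0 < N)%N)
  (w : 'I_N -> 'I_N -> R) (w_pos : forall i j : 'I_N, i != j -> 0 < w i j)
  (Px : 'I_N -> probability X R) (E : X -> Z) (mE : measurable_fun [set: X] E) :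
  let bound := (- (ln 2 / N%:R) * \sum_(i < N) \sum_(j < N | j != i) w i j)%:E in
  (bound <= max_disc_value w Px E)%E /\
  ((forall (i j : 'I_N) (A : set Z), measurable A ->
      enc_dist Px E i A = enc_dist Px E j A) ->
   max_disc_value w Px E = bound).
Proof.
move=> bound.
pose D0 : 'I_N -> 'I_N -> Z -> R := fun _ _ _ => 2^-1.
have adm0 : admissible_disc D0.
  move=> i j _; split; first exact: measurable_cst.
  by move=> z; rewrite /D0; apply/andP; split; lra.
have val0 : disc_value w Px E D0 = bound.
  rewrite /disc_value /bound -(@sum_val _ _ N_gt0); congr (_ * _)%E.
  apply: eq_bigr => i _; apply: eq_bigr => j _.
  rewrite /D0 !int_cstP /=; congr EFin.
  have -> : 1 - 2^-1 = 2^-1 :> R by field.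
  rewrite lnV ?posrE //.
  have N0 : N%:R != 0 :> R by rewrite pnatr_eq0 -lt0n.
  rewrite mulr2n; field; exact: N0.
have part1 : (bound <= max_disc_value w Px E)%E.
  rewrite -val0; apply: ereal_sup_ubound; exists D0 => //.
split => // Heq.
apply: le_anti; rewrite part1 andbT.
apply: ge_ereal_sup => _ [D HD <-].
rewrite /disc_value /bound -(@sum_val _ _ N_gt0).
apply: lee_wpmul2l; first by rewrite lee_fin invr_ge0.
apply: lee_sum => i _; apply: lee_sum => j ji.
have [mD D01] := HD i j ltac:(by rewrite eq_sym).
have [a0 [b0 ab]] := @pair_bound _ _ _ _ _ (Px i) (Px j) E mE (D i j) mD D01 (Heq i j).
rewrite -le0_muleDr; first last.
- exact: b0.
- exact: a0.
rewrite EFinM; apply: lee_wpmul2l.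
  by rewrite lee_fin ltW // w_pos // eq_sym.
by rewrite mulrC EFinM; apply: lee_wpmul2l => //.
Qed.
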